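(* For each $C>0$ and $K>1$ there exist $D=D(K,C)>C$ and $L=L(K,C)>C$ with the following property. Let $J\subseteq\mathbb Z$ be a nonempty set of consecutive integers, $p\in X$, and for each $i\in J$ let $\kappa_i$ be a $K$-contracting axis from $x_i$ to $y_i$ whose domain has length greater than $L$. Suppose $(\kappa_i)_{i\in J}$ is $C$-aligned. Then: (1) for each $i\in J$, the statements ''$(\kappa_i,p)$ is $D$-aligned'' and ''$(p,\kappa_i)$ is $D$-aligned'' cannot hold simultaneously; (2) the set $J_0=\{j\in J:(\kappa_i,p)\text{ is }D\text{-aligned for all }i\in J,\ i<j,\text{ and }(p,\kappa_i)\text{ is }D\text{-aligned for all }i\in J,\ i>j\}$ consists of either a single integer or two consecutive integers; (3) $\pi_{\bigcup_i\kappa_i}(p)$ is nonempty and contained in $\bigcup_{j\in J_0}\pi_{\kappa_j}(p)$; (4) $(\kappa_l,\kappa_m)$ is $D$-aligned for all $l,m\in J$ with $l<m$.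
   Context: $X$ is a geodesic metric space. For $A\subseteq X$, $\pi_A(z)=\{a\in A:d(z,a)=d(z,A)\}$ and $\pi_A(B)=\bigcup_{b\in B}\pi_A(b)$. $A$ is $K$-contracting if $\pi_A(z)\ne\emptyset$ for all $z$ and $d(x,y)\le d(x,A)-K$ implies $\operatorname{diam}(\pi_A(x)\cup\pi_A(y))\le K$. A $K$-quasigeodesic is a map $\gamma$ from an interval of $\mathbb R$ or a set of consecutive integers to $X$ with $|s-t|/K-K\le d(\gamma(s),\gamma(t))\le K|s-t|+K$; a $K$-contracting axis is a $K$-quasigeodesic with $K$-contracting image; projections onto a path mean onto its image. Alignment: for paths $\kappa$ from $a$ to $a'$ and $\eta$ from $b'$ to $b$, $(\kappa,\eta)$ is $C$-aligned if $\operatorname{diam}(a'\cup\pi_\kappa(\eta))<C$ and $\operatorname{diam}(b'\cup\pi_\eta(\kappa))<C$. A sequence $(\kappa_i)_{i\in J}$ of paths is $C$-aligned if $(\kappa_i,\kappa_{i+1})$ is $C$-aligned whenever $i,i+1\in J$. A point is treated as a degenerate path with both endpoints equal to itself; thus $(\kappa,p)$ is $D$-aligned iff $\operatorname{diam}(a'\cup\pi_\kappa(p))<D$ where $a'$ is the terminal point of $\kappa$, and $(p,\kappa)$ is $D$-aligned iff $\operatorname{diam}(a\cup\pi_\kappa(p))<D$ where $a$ is the initial point of $\kappa$. *)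

(* Defs.v *)
From Stdlib Require Import Reals ZArith.
From Coquelicot Require Import Coquelicot.
Open Scope R_scope.

Set Implicit Arguments.

Section Geo.
Variable X : Type.
Variable d : X -> X -> R.

Definition is_metric : Prop :=
  (forall x, d x x = 0) /\ (forall x y, d x y = 0 -> x = y) /\
  (forall x y, d x y = d y x) /\ (forall x y z, d x z <= d x y + d y z).

Definition is_geodesic : Prop :=
  forall x y, exists g : R -> X, g 0 = x /\ g (d x y) = y /\
    forall s t, 0 <= s <= d x y -> 0 <= t <= d x y -> d (g s) (g t) = Rabs (s - t).

Definition dist_set (A : X -> Prop) (z : X) : R :=
  real (Glb_Rbar (fun r => exists a, A a /\ r = d z a)).

Definition diam (S : X -> Prop) : Rbar :=
  Lub_Rbar (fun r => exists u v, S u /\ S v /\ r = d u v).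

Definition proj (A : X -> Prop) (z : X) : X -> Prop :=
  fun a => A a /\ d z a = dist_set A z.

Definition proj_set (A B : X -> Prop) : X -> Prop :=
  fun a => exists b, B b /\ proj A b a.

Definition setU (A B : X -> Prop) : X -> Prop := fun z => A z \/ B z.
Definition set1 (x : X) : X -> Prop := fun z => z = x.

Definition contracting (K : R) (A : X -> Prop) : Prop :=
  (forall z, exists a, proj A z a) /\
  forall x y, d x y <= dist_set A x - K ->
    Rbar_le (diam (setU (proj A x) (proj A y))) (Finite K).

(** Paths: a map defined on a compact domain [p_a, p_b], which is either a real
    interval (p_disc = false) or the set of integers in [p_a, p_b]
    (p_disc = true, with p_a, p_b integers). *)
Record path := mkPath { p_disc : bool; p_a : R; p_b : R; p_f : R -> X }.

Definition pdom (k : path) (t : R) : Prop :=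
  p_a k <= t <= p_b k /\ (p_disc k = true -> exists n : Z, t = IZR n).

Definition wf_path (k : path) : Prop :=
  p_a k <= p_b k /\
  (p_disc k = true -> (exists n : Z, p_a k = IZR n) /\ (exists n : Z, p_b k = IZR n)).

Definition image (k : path) : X -> Prop := fun z => exists t, pdom k t /\ z = p_f k t.
Definition init (k : path) : X := p_f k (p_a k).
Definition term (k : path) : X := p_f k (p_b k).
Definition dom_length (k : path) : R := p_b k - p_a k.

Definition quasigeodesic (K : R) (k : path) : Prop :=
  forall s t, pdom k s -> pdom k t ->
    Rabs (s - t) / K - K <= d (p_f k s) (p_f k t) <= K * Rabs (s - t) + K.

Definition contracting_axis (K : R) (k : path) (x y : X) : Prop :=
  wf_path k /\ init k = x /\ term k = y /\ quasigeodesic K k /\ contracting K (image k).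

Definition aligned (C : R) (k e : path) : Prop :=
  Rbar_lt (diam (setU (set1 (term k)) (proj_set (image k) (image e)))) (Finite C) /\
  Rbar_lt (diam (setU (set1 (init e)) (proj_set (image e) (image k)))) (Finite C).

Definition aligned_path_pt (D : R) (k : path) (p : X) : Prop :=
  Rbar_lt (diam (setU (set1 (term k)) (proj (image k) p))) (Finite D).
Definition aligned_pt_path (D : R) (p : X) (k : path) : Prop :=
  Rbar_lt (diam (setU (set1 (init k)) (proj (image k) p))) (Finite D).

End Geo.

Definition consecutive_Z (J : Z -> Prop) : Prop :=
  (exists i, J i) /\ forall i j k, J i -> J k -> (i <= j <= k)%Z -> J j.

(* Main.v *)
Require Import Defs.
From Stdlib Require Import Reals ZArith.
From Coquelicot Require Import Coquelicot.
From Stdlib Require Import Lra Lia Classical.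
Open Scope R_scope.



Section Basics.
Context {X : Type}.
Context {d : X -> X -> R}.
Hypothesis Hmet : is_metric d.

Lemma d_refl x : d x x = 0. Proof. apply Hmet. Qed.
Lemma d_sym x y : d x y = d y x. Proof. apply Hmet. Qed.
Lemma d_tri x y z : d x z <= d x y + d y z. Proof. apply Hmet. Qed.
Lemma d_nonneg x y : 0 <= d x y.
Proof. pose proof (d_tri x y x). rewrite d_refl, (d_sym y x) in H. lra. Qed.

Lemma diam_pts (S : X -> Prop) u v : S u -> S v -> Rbar_le (d u v) (diam d S).
Proof.
  intros Hu Hv. destruct (Lub_Rbar_correct (fun r => exists u v, S u /\ S v /\ r = d u v)) as [H _].
  apply H. eauto.
Qed.

Lemma diam_lt_pts (S : X -> Prop) c u v : Rbar_lt (diam d S) (Finite c) -> S u -> S v -> d u v < c.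
Proof.
  intros H Hu Hv. pose proof (diam_pts S u v Hu Hv).
  pose proof (Rbar_le_lt_trans _ _ _ H0 H). exact H1.
Qed.

Lemma diam_le_pts (S : X -> Prop) c u v : Rbar_le (diam d S) (Finite c) -> S u -> S v -> d u v <= c.
Proof.
  intros H Hu Hv. pose proof (diam_pts S u v Hu Hv).
  pose proof (Rbar_le_trans _ _ _ H0 H). exact H1.
Qed.

Lemma diam_bound (S : X -> Prop) c : (forall u v, S u -> S v -> d u v <= c) -> Rbar_le (diam d S) (Finite c).
Proof.
  intros H. destruct (Lub_Rbar_correct (fun r => exists u v, S u /\ S v /\ r = d u v)) as [_ H2].
  apply H2. intros r (u & v & Hu & Hv & ->). simpl. auto.
Qed.

Lemma diam_lt (S : X -> Prop) c c' : (forall u v, S u -> S v -> d u v <= c) -> c < c' -> Rbar_lt (diam d S) (Finite c').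
Proof.
  intros H Hc. eapply Rbar_le_lt_trans. apply diam_bound. exact H. simpl. exact Hc.
Qed.

Lemma diam_pointed_lt (S : X -> Prop) t r c : (forall u, S u -> d u t <= r) -> 0 <= r -> 2 * r < c ->
  Rbar_lt (diam d (setU (set1 t) S)) (Finite c).
Proof.
  intros H Hr Hc. apply diam_lt with (c := 2 * r); auto.
  intros u v [Hu|Hu] [Hv|Hv]; unfold set1 in *; subst.
  - rewrite d_refl; lra.
  - rewrite d_sym. specialize (H v Hv). lra.
  - specialize (H u Hu). lra.
  - pose proof (H u Hu). pose proof (H v Hv). pose proof (d_tri u t v). rewrite (d_sym t v) in H2. lra.
Qed.

Lemma pointed_lt_pts (S : X -> Prop) t c u : Rbar_lt (diam d (setU (set1 t) S)) (Finite c) -> S u -> d u t < c.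
Proof.
  intros H Hu. apply (diam_lt_pts _ c u t H). right; auto. left; reflexivity.
Qed.

Definition isproj (A : X -> Prop) z a := A a /\ forall a', A a' -> d z a <= d z a'.

Lemma dist_set_char A z a : isproj A z a -> dist_set d A z = d z a.
Proof.
  intros [Ha Hm]. unfold dist_set.
  rewrite (is_glb_Rbar_unique _ (Finite (d z a))). reflexivity.
  split.
  - intros r (a' & Ha' & ->). simpl. auto.
  - intros b Hb. apply Hb. eauto.
Qed.

Lemma dist_set_le A z a' : A a' -> dist_set d A z <= d z a'.
Proof.
  intros Ha'. unfold dist_set.
  destruct (Glb_Rbar_correct (fun r => exists a, A a /\ r = d z a)) as [H _].
  assert (Hl := H (d z a') (ex_intro _ a' (conj Ha' eq_refl))).
  destruct (Glb_Rbar _); simpl in *; auto. contradiction. apply d_nonneg.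
Qed.

Lemma proj_isproj A z a : proj d A z a -> isproj A z a.
Proof.
  intros [Ha He]. split; auto. intros a' Ha'. rewrite He. apply dist_set_le; auto.
Qed.

Lemma isproj_proj A z a : isproj A z a -> proj d A z a.
Proof.
  intros H. split. apply H. symmetry; apply dist_set_char; auto.
Qed.

End Basics.


Section Contr.
Context {X : Type}.
Context {d : X -> X -> R}.
Hypothesis Hmet : is_metric d.
Hypothesis Hgeo : is_geodesic d.

Lemma geo_pt x y s : 0 <= s <= d x y -> exists z, d x z = s /\ d z y = d x y - s.
Proof.
  intros Hs. destruct (Hgeo x y) as (g & H0 & H1 & H).
  exists (g s).
  assert (E1 : d (g 0) (g s) = Rabs (0 - s)) by (apply H; lra).
  assert (E2 : d (g s) (g (d x y)) = Rabs (s - d x y)) by (apply H; lra).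
  rewrite H0 in E1. rewrite H1 in E2. rewrite E1, E2.
  split; [rewrite Rabs_left1|rewrite Rabs_left1]; lra.
Qed.

Lemma geo_pt2 x y s t : 0 <= s -> s <= t -> t <= d x y ->
  exists z1 z2, d x z1 = s /\ d z1 z2 = t - s /\ d z2 y = d x y - t.
Proof.
  intros Hs Hst Ht. destruct (Hgeo x y) as (g & H0 & H1 & H).
  exists (g s), (g t).
  assert (E1 : d (g 0) (g s) = Rabs (0 - s)) by (apply H; lra).
  assert (E2 : d (g t) (g (d x y)) = Rabs (t - d x y)) by (apply H; lra).
  assert (E3 : d (g s) (g t) = Rabs (s - t)) by (apply H; lra).
  rewrite H0 in E1. rewrite H1 in E2. rewrite E1, E2, E3.
  split; [|split]; rewrite Rabs_left1; lra.
Qed.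

Variable K : R.
Hypothesis HK : 0 < K.
Variable A : X -> Prop.
Hypothesis HA : contracting d K A.

Notation f := (dist_set d A).

Lemma proj_ex z : exists a, proj d A z a.
Proof. apply HA. Qed.

Lemma proj_d z a : proj d A z a -> d z a = f z.
Proof. intros [_ H]; exact H. Qed.

Lemma f_nonneg z : 0 <= f z.
Proof. destruct (proj_ex z) as [a Ha]. rewrite <- (proj_d _ _ Ha). apply (d_nonneg Hmet). Qed.

Lemma contr x y a b : d x y <= f x - K -> proj d A x a -> proj d A y b -> d a b <= K.
Proof.
  intros H Ha Hb. destruct HA as [_ H2]. specialize (H2 x y H).
  apply (diam_le_pts _ _ _ _ H2); [left|right]; auto.
Qed.

Lemma Bweak x y a b : proj d A x a -> proj d A y b -> 2 * K < d a b -> f x + f y - 2 * K <= d x y.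
Proof.
  intros Ha Hb Hab. apply Rnot_lt_le. intros Hxy.
  destruct (Rle_dec (d x y) (f x - K)) as [H1|H1].
  { pose proof (contr _ _ _ _ H1 Ha Hb). lra. }
  destruct (Rle_dec (d y x) (f y - K)) as [H2|H2].
  { pose proof (contr _ _ _ _ H2 Hb Ha). rewrite (d_sym Hmet) in H. lra. }
  rewrite (d_sym Hmet) in H2.
  destruct (geo_pt x y (f x - K)) as (z & Hxz & Hzy). lra.
  destruct (proj_ex z) as [c Hc].
  assert (E1 : d a c <= K) by (apply (contr x z); auto; lra).
  assert (E2 : d b c <= K) by (apply (contr y z); auto; rewrite (d_sym Hmet); lra).
  pose proof (d_tri Hmet a c b). rewrite (d_sym Hmet c b) in H. lra.
Qed.

Lemma CL x y a b : proj d A x a -> proj d A y b -> d a b <= 2 * d x y + 2 * K.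
Proof.
  intros Ha Hb. destruct (Rle_dec (d a b) (2 * K)) as [H|H].
  { pose proof (d_nonneg Hmet x y). lra. }
  pose proof (Bweak _ _ _ _ Ha Hb ltac:(lra)).
  pose proof (d_tri Hmet a x b) as T1. pose proof (d_tri Hmet x y b) as T2.
  pose proof (proj_d _ _ Ha) as P1. pose proof (proj_d _ _ Hb) as P2.
  rewrite (d_sym Hmet a x) in T1. lra.
Qed.

Lemma near_pt x a z : proj d A x a -> d x z = (if Rle_dec K (f x) then f x - K else 0) ->
  exists c, proj d A z c /\ d a c <= K.
Proof.
  intros Ha Hz. destruct (Rle_dec K (f x)) as [H|H].
  - destruct (proj_ex z) as [c Hc]. exists c. split; auto. apply (contr x z); auto. lra.
  - assert (x = z) by (apply Hmet; auto). subst z. exists a. split; auto. rewrite (d_refl Hmet). lra.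
Qed.

Lemma Bstrong x y a b : proj d A x a -> proj d A y b -> 2 * K < d a b ->
  f x + f y + d a b / 2 - 4 * K <= d x y.
Proof.
  intros Ha Hb Hab.
  pose proof (Bweak _ _ _ _ Ha Hb Hab) as HB.
  set (s1 := if Rle_dec K (f x) then f x - K else 0).
  set (s2 := if Rle_dec K (f y) then f y - K else 0).
  assert (Hs1 : 0 <= s1 /\ f x - K <= s1).
  { unfold s1; destruct (Rle_dec K (f x)) as [h|h]; [|apply Rnot_le_lt in h]; pose proof (f_nonneg x); lra. }
  assert (Hs2 : 0 <= s2 /\ f y - K <= s2).
  { unfold s2; destruct (Rle_dec K (f y)) as [h|h]; [|apply Rnot_le_lt in h]; pose proof (f_nonneg y); lra. }
  assert (Hsum : s1 + s2 <= d x y).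
  { unfold s1, s2. destruct (Rle_dec K (f x)), (Rle_dec K (f y)).
    - lra.
    - apply Rnot_lt_le; intro Hc.
      assert (d x y <= f x - K) by lra.
      pose proof (contr _ _ _ _ H Ha Hb). lra.
    - apply Rnot_lt_le; intro Hc.
      assert (d y x <= f y - K) by (rewrite (d_sym Hmet); lra).
      pose proof (contr _ _ _ _ H Hb Ha). rewrite (d_sym Hmet) in H0. lra.
    - rewrite Rplus_0_r. apply (d_nonneg Hmet). }
  destruct (geo_pt2 x y s1 (d x y - s2)) as (z1 & z2 & Hxz1 & Hz12 & Hz2y); try lra.
  destruct (near_pt x a z1 Ha Hxz1) as (c1 & Hc1 & Hac1).
  assert (Hyz2 : d y z2 = s2) by (rewrite (d_sym Hmet); lra).
  destruct (near_pt y b z2 Hb Hyz2) as (c2 & Hc2 & Hbc2).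
  pose proof (CL _ _ _ _ Hc1 Hc2) as HCL.
  pose proof (d_tri Hmet a c1 b) as T1. pose proof (d_tri Hmet c1 c2 b) as T2.
  rewrite (d_sym Hmet c2 b) in T2. lra.
Qed.
End Contr.

Section Paths.
Context {X : Type}.
Context {d : X -> X -> R}.
Hypothesis Hmet : is_metric d.
Hypothesis Hgeo : is_geodesic d.

Lemma init_in (k : path X) : wf_path k -> image k (init k).
Proof.
  intros [H1 H2]. exists (p_a k). split; [|reflexivity]. split. lra.
  intros Hd. apply (H2 Hd).
Qed.

Lemma term_in (k : path X) : wf_path k -> image k (term k).
Proof.
  intros [H1 H2]. exists (p_b k). split; [|reflexivity]. split. lra.
  intros Hd. apply (H2 Hd).
Qed.

Lemma al1 C (k e : path X) z w : aligned d C k e -> image e z -> proj d (image k) z w -> d w (term k) < C.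
Proof.
  intros [H1 _] Hz Hw. eapply pointed_lt_pts; [exact H1|]. exists z; auto.
Qed.

Lemma al2 C (k e : path X) z w : aligned d C k e -> image k z -> proj d (image e) z w -> d w (init e) < C.
Proof.
  intros [_ H2] Hz Hw. eapply pointed_lt_pts; [exact H2|]. exists z; auto.
Qed.

Variables K C : R.
Hypothesis HK : 0 < K.
Hypothesis HC : 0 < C.
Variables k e : path X.
Hypothesis Hk : contracting d K (image k).
Hypothesis He : contracting d K (image e).
Hypothesis Hwe : wf_path e.
Hypothesis Hal : aligned d C k e.

Lemma projD A z a : proj d A z a -> d z a = dist_set d A z.
Proof. intros [_ H]; exact H. Qed.

Lemma projA A z a : proj d A z a -> A a.
Proof. intros [H _]; exact H. Qed.

Lemma keyP p u v : proj d (image k) p u -> proj d (image e) p v ->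
  d u (term k) <= 8 * K + 3 * C \/ d v (init e) <= 2 * K + C.
Proof.
  intros Hu Hv. apply NNPP. intros Hn. apply not_or_and in Hn. destruct Hn as [N1 N2].
  apply Rnot_le_lt in N1. apply Rnot_le_lt in N2.
  destruct (proj_ex K _ Hk v) as [w Hw].
  assert (Hwt : d w (term k) < C) by (eapply al1; eauto; eapply projA; eauto).
  assert (Huw : 2 * K < d u w).
  { pose proof (d_tri Hmet u w (term k)). lra. }
  pose proof (Bweak Hmet Hgeo K HK _ Hk _ _ _ _ Hu Hw Huw) as B1.
  destruct (proj_ex K _ He u) as [u' Hu'].
  assert (Hu't : d u' (init e) < C) by (eapply al2; eauto; eapply projA; eauto).
  assert (Hvu' : 2 * K < d v u').
  { pose proof (d_tri Hmet v u' (init e)). lra. }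
  pose proof (Bweak Hmet Hgeo K HK _ He _ _ _ _ Hv Hu' Hvu') as B2.
  rewrite <- (projD _ _ _ Hu), <- (projD _ _ _ Hv), <- (projD _ _ _ Hu') in *.
  rewrite <- (projD _ _ _ Hw) in B1.
  pose proof (d_nonneg Hmet v w).
  destruct (proj_ex K _ Hk (init e)) as [w2 Hw2].
  assert (Hw2t : d w2 (term k) < C) by (eapply al1; eauto; apply init_in; auto).
  assert (Hiw2 : d (init e) w2 <= d (init e) u).
  { rewrite (projD _ _ _ Hw2). apply (dist_set_le Hmet). eapply projA; eauto. }
  pose proof (d_tri Hmet (init e) u' u).
  pose proof (d_tri Hmet u (init e) (term k)).
  pose proof (d_tri Hmet (init e) w2 (term k)).
  rewrite (d_sym Hmet u' (init e)), (d_sym Hmet u (init e)) in *.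
  rewrite (d_sym Hmet u u') in *. rewrite (d_sym Hmet p v) in *.
  lra.
Qed.

Lemma keyM1 p u q : proj d (image e) p u -> 8 * K + 3 * C < d u (init e) -> image k q ->
  dist_set d (image e) p + C <= d p q.
Proof.
  intros Hu Hd Hq. destruct (proj_ex K _ He q) as [b Hb].
  assert (Hbi : d b (init e) < C) by (eapply al2; eauto).
  assert (Hub : 8 * K + 2 * C < d u b).
  { pose proof (d_tri Hmet u b (init e)). lra. }
  pose proof (Bstrong Hmet Hgeo K HK _ He _ _ _ _ Hu Hb ltac:(lra)).
  pose proof (f_nonneg Hmet K _ He q). lra.
Qed.

Lemma keyM2 p u q : proj d (image k) p u -> 8 * K + 3 * C < d u (term k) -> image e q ->
  dist_set d (image k) p + C <= d p q.
Proof.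
  intros Hu Hd Hq. destruct (proj_ex K _ Hk q) as [b Hb].
  assert (Hbi : d b (term k) < C) by (eapply al1; eauto).
  assert (Hub : 8 * K + 2 * C < d u b).
  { pose proof (d_tri Hmet u b (term k)). lra. }
  pose proof (Bstrong Hmet Hgeo K HK _ Hk _ _ _ _ Hu Hb ltac:(lra)).
  pose proof (f_nonneg Hmet K _ Hk q). lra.
Qed.

End Paths.

Section Comb.
Variable J : Z -> Prop.
Hypothesis HJ : consecutive_Z J.
Variables a b : Z -> Prop.
Variable f : Z -> R.
Variable C : R.
Hypothesis HC : 0 < C.
Hypothesis Hf : forall i, J i -> 0 <= f i.
Hypothesis HE : forall i, J i -> ~ (a i /\ b i).
Hypothesis HP : forall i, J i -> J (i + 1)%Z -> a i \/ b (i + 1)%Z.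
Hypothesis HM1 : forall i, J i -> J (i + 1)%Z -> ~ b (i + 1)%Z -> f (i + 1)%Z + C <= f i.
Hypothesis HM2 : forall i, J i -> J (i + 1)%Z -> ~ a i -> f i + C <= f (i + 1)%Z.

Definition J0 j := J j /\ (forall i, J i -> (i < j)%Z -> a i) /\ (forall i, J i -> (j < i)%Z -> b i).
Definition J0' j := J j /\ (J (j - 1)%Z -> a (j - 1)%Z) /\ (J (j + 1)%Z -> b (j + 1)%Z).

Lemma Jbetw i j k : J i -> J k -> (i <= j <= k)%Z -> J j.
Proof. intros. destruct HJ as [_ H']. exact (H' i j k H H0 H1). Qed.

Lemma down i : J i -> J (i - 1)%Z -> a i -> a (i - 1)%Z.
Proof.
  intros Hi Hi1 Ha. destruct (HP (i - 1)%Z Hi1 ltac:(replace (i - 1 + 1)%Z with i by lia; auto)) as [H|H]; auto.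
  replace (i - 1 + 1)%Z with i in H by lia. exfalso; apply (HE i); auto.
Qed.

Lemma up i : J i -> J (i + 1)%Z -> b i -> b (i + 1)%Z.
Proof.
  intros Hi Hi1 Hb. destruct (HP i Hi Hi1) as [H|H]; auto.
  exfalso; apply (HE i); auto.
Qed.

Lemma down_many (n : nat) m : J m -> a m -> J (m - Z.of_nat n)%Z -> a (m - Z.of_nat n)%Z.
Proof.
  induction n; intros Hm Ham Hn.
  - replace (m - Z.of_nat 0)%Z with m by lia. auto.
  - assert (J (m - Z.of_nat n)%Z) by (apply (Jbetw (m - Z.of_nat (S n))%Z _ m); auto; lia).
    replace (m - Z.of_nat (S n))%Z with (m - Z.of_nat n - 1)%Z in * by lia.
    apply down; auto.
Qed.

Lemma up_many (n : nat) m : J m -> b m -> J (m + Z.of_nat n)%Z -> b (m + Z.of_nat n)%Z.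
Proof.
  induction n; intros Hm Hbm Hn.
  - replace (m + Z.of_nat 0)%Z with m by lia. auto.
  - assert (J (m + Z.of_nat n)%Z) by (apply (Jbetw m _ (m + Z.of_nat (S n))%Z); auto; lia).
    replace (m + Z.of_nat (S n))%Z with (m + Z.of_nat n + 1)%Z in * by lia.
    apply up; auto.
Qed.

Lemma J0'_J0 j : J0' j -> J0 j.
Proof.
  intros (Hj & Ha & Hb). split; [auto|split].
  - intros i Hi Hij. assert (J (j - 1)%Z) by (apply (Jbetw i _ j); auto; lia).
    replace i with ((j - 1) - Z.of_nat (Z.to_nat (j - 1 - i)))%Z by lia.
    apply down_many; auto. replace ((j - 1) - Z.of_nat (Z.to_nat (j - 1 - i)))%Z with i by lia. auto.
  - intros i Hi Hij. assert (J (j + 1)%Z) by (apply (Jbetw j _ i); auto; lia).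
    replace i with ((j + 1) + Z.of_nat (Z.to_nat (i - j - 1)))%Z by lia.
    apply up_many; auto. replace ((j + 1) + Z.of_nat (Z.to_nat (i - j - 1)))%Z with i by lia. auto.
Qed.

Lemma J0_J0' j : J0 j -> J0' j.
Proof.
  intros (Hj & Ha & Hb). split; [auto|split].
  - intros H. apply Ha; auto; lia.
  - intros H. apply Hb; auto; lia.
Qed.

Lemma J0_close j k : J0 j -> J0 k -> (j + 2 <= k)%Z -> False.
Proof.
  intros (Hj & Ha & Hb) (Hk & Ha' & Hb') Hjk.
  assert (J (k - 1)%Z) by (apply (Jbetw j _ k); auto; lia).
  apply (HE (k - 1)%Z); auto. split. apply Ha'; auto; lia. apply Hb; auto; lia.
Qed.

Lemma arch_contra (x : R) : (forall n : nat, INR n * C <= x) -> False.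
Proof.
  intros H. destruct (INR_unbounded (x / C)) as [n Hn].
  specialize (H n). assert (x / C * C = x) by (field; lra).
  assert (x / C * C < INR n * C) by (apply Rmult_lt_compat_r; lra). lra.
Qed.

Lemma J0_exists : exists j, J0' j.
Proof.
  destruct HJ as [[i0 Hi0] _].
  destruct (classic (a i0)) as [Ha0|Ha0].
  - assert (Q : forall n : nat, (J (i0 + Z.of_nat n)%Z /\ a (i0 + Z.of_nat n)%Z) \/ exists j, J0' j).
    { induction n.
      - left. replace (i0 + Z.of_nat 0)%Z with i0 by lia. auto.
      - destruct IHn as [[HJn Han]|H]; [|right; auto].
        replace (i0 + Z.of_nat (S n))%Z with (i0 + Z.of_nat n + 1)%Z by lia.
        set (m := (i0 + Z.of_nat n)%Z) in *.
        destruct (classic (J (m + 1)%Z)) as [HJ1|HJ1].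
        + destruct (classic (a (m + 1)%Z)) as [Ha1|Ha1]. left; auto.
          right. exists (m + 1)%Z. split; [auto|split].
          * replace (m + 1 - 1)%Z with m by lia. auto.
          * intros HJ2. destruct (HP (m + 1)%Z HJ1 HJ2) as [H|H]; [contradiction|auto].
        + right. exists m. split; [auto|split].
          * intros HJ2. apply down; auto.
          * intros; contradiction. }
    destruct (classic (exists n : nat, ~ (J (i0 + Z.of_nat n)%Z /\ a (i0 + Z.of_nat n)%Z))) as [[n Hn]|Hn].
    + destruct (Q n) as [H|H]; [contradiction|auto].
    + exfalso. apply (arch_contra (f i0)). intros n.
      assert (G : forall n : nat, f (i0 + Z.of_nat n)%Z + INR n * C <= f i0).
      { induction n0.
        - simpl. replace (i0 + 0)%Z with i0 by lia. lra.
        - assert (H1 := NNPP _ (fun h => Hn (ex_intro _ n0 h))).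
          assert (H2 := NNPP _ (fun h => Hn (ex_intro _ (S n0) h))).
          replace (i0 + Z.of_nat (S n0))%Z with (i0 + Z.of_nat n0 + 1)%Z in * by lia.
          destruct H1 as [J1 A1]. destruct H2 as [J2 A2].
          assert (f (i0 + Z.of_nat n0 + 1)%Z + C <= f (i0 + Z.of_nat n0)%Z).
          { apply HM1; auto. intros Hb. apply (HE _ J2); auto. }
          rewrite S_INR. lra. }
      specialize (G n). assert (H1 := NNPP _ (fun h => Hn (ex_intro _ n h))).
      pose proof (Hf _ (proj1 H1)). lra.
  - assert (Q : forall n : nat, (J (i0 - Z.of_nat n)%Z /\ ~ a (i0 - Z.of_nat n)%Z) \/ exists j, J0' j).
    { induction n.
      - left. replace (i0 - Z.of_nat 0)%Z with i0 by lia. auto.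
      - destruct IHn as [[HJn Han]|H]; [|right; auto].
        replace (i0 - Z.of_nat (S n))%Z with (i0 - Z.of_nat n - 1)%Z by lia.
        set (m := (i0 - Z.of_nat n)%Z) in *.
        destruct (classic (J (m - 1)%Z)) as [HJ1|HJ1].
        + destruct (classic (a (m - 1)%Z)) as [Ha1|Ha1]; [|left; auto].
          right. exists m. split; [auto|split].
          * auto.
          * intros HJ2. destruct (HP m HJn HJ2) as [H|H]; [contradiction|auto].
        + right. exists m. split; [auto|split].
          * intros; contradiction.
          * intros HJ2. destruct (HP m HJn HJ2) as [H|H]; [contradiction|auto]. }
    destruct (classic (exists n : nat, ~ (J (i0 - Z.of_nat n)%Z /\ ~ a (i0 - Z.of_nat n)%Z))) as [[n Hn]|Hn].
    + destruct (Q n) as [H|H]; [contradiction|auto].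
    + exfalso. apply (arch_contra (f i0)). intros n.
      assert (G : forall n : nat, f (i0 - Z.of_nat n)%Z + INR n * C <= f i0).
      { induction n0.
        - simpl. replace (i0 - 0)%Z with i0 by lia. lra.
        - assert (H1 := NNPP _ (fun h => Hn (ex_intro _ n0 h))).
          assert (H2 := NNPP _ (fun h => Hn (ex_intro _ (S n0) h))).
          replace (i0 - Z.of_nat (S n0))%Z with (i0 - Z.of_nat n0 - 1)%Z in * by lia.
          destruct H1 as [J1 A1]. destruct H2 as [J2 A2].
          assert (f (i0 - Z.of_nat n0 - 1)%Z + C <= f (i0 - Z.of_nat n0 - 1 + 1)%Z).
          { apply HM2; auto. replace (i0 - Z.of_nat n0 - 1 + 1)%Z with (i0 - Z.of_nat n0)%Z by lia. auto. }
          replace (i0 - Z.of_nat n0 - 1 + 1)%Z with (i0 - Z.of_nat n0)%Z in H by lia.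
          rewrite S_INR. lra. }
      specialize (G n). assert (H1 := NNPP _ (fun h => Hn (ex_intro _ n h))).
      pose proof (Hf _ (proj1 H1)). lra.
Qed.

Lemma J0_shape : (exists j, forall k, J0 k <-> k = j) \/ (exists j, forall k, J0 k <-> (k = j \/ k = (j + 1)%Z)).
Proof.
  destruct J0_exists as [j Hj]. apply J0'_J0 in Hj.
  assert (Cl : forall k, J0 k -> (j - 1 <= k <= j + 1)%Z).
  { intros k Hk. destruct (Z_le_gt_dec k (j + 1)); destruct (Z_le_gt_dec (j - 1) k); try lia.
    - exfalso; apply (J0_close k j); auto; lia.
    - exfalso; apply (J0_close j k); auto; lia. }
  destruct (classic (J0 (j + 1)%Z)) as [H1|H1].
  - right. exists j. intros k. split.
    + intros Hk. assert (k <> (j - 1)%Z) by (intros ->; apply (J0_close (j - 1)%Z (j + 1)%Z); auto; lia).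
      specialize (Cl k Hk). lia.
    + intros [->| ->]; auto.
  - destruct (classic (J0 (j - 1)%Z)) as [H2|H2].
    + right. exists (j - 1)%Z. intros k. split.
      * intros Hk. specialize (Cl k Hk). assert (k <> (j + 1)%Z) by (intros ->; auto). lia.
      * intros [->| ->]; auto. replace (j - 1 + 1)%Z with j by lia; auto.
    + left. exists j. intros k. split.
      * intros Hk. specialize (Cl k Hk). assert (k <> (j + 1)%Z) by (intros ->; auto).
        assert (k <> (j - 1)%Z) by (intros ->; auto). lia.
      * intros ->; auto.
Qed.

Lemma min_J0 m : J m -> (forall i, J i -> f m <= f i) -> J0 m.
Proof.
  intros Hm Hmin. apply J0'_J0. split; [auto|split].
  - intros H1. apply NNPP; intros Ha.
    assert (f (m - 1)%Z + C <= f (m - 1 + 1)%Z) by (apply HM2; auto; replace (m - 1 + 1)%Z with m by lia; auto).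
    replace (m - 1 + 1)%Z with m in H by lia. specialize (Hmin _ H1). lra.
  - intros H1. apply NNPP; intros Hb.
    pose proof (HM1 m Hm H1 Hb). specialize (Hmin _ H1). lra.
Qed.

Lemma min_exists : exists m, J m /\ forall i, J i -> f m <= f i.
Proof.
  destruct J0_exists as [j Hj]. pose proof (J0'_J0 _ Hj) as (Hjj & Ha & Hb).
  assert (L1 : forall n : nat, J (j - 1 - Z.of_nat n)%Z -> f (j - 1)%Z <= f (j - 1 - Z.of_nat n)%Z).
  { induction n; intros Hn.
    - replace (j - 1 - Z.of_nat 0)%Z with (j - 1)%Z by lia. lra.
    - assert (J (j - 1 - Z.of_nat n)%Z) by (apply (Jbetw (j - 1 - Z.of_nat (S n))%Z _ j); auto; lia).
      specialize (IHn H).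
      replace (j - 1 - Z.of_nat (S n))%Z with (j - 1 - Z.of_nat n - 1)%Z in * by lia.
      assert (f (j - 1 - Z.of_nat n - 1 + 1)%Z + C <= f (j - 1 - Z.of_nat n - 1)%Z).
      { apply HM1; auto; replace (j - 1 - Z.of_nat n - 1 + 1)%Z with (j - 1 - Z.of_nat n)%Z by lia; auto.
        intros Hb'. apply (HE _ H). split; auto. apply Ha; auto. lia. }
      replace (j - 1 - Z.of_nat n - 1 + 1)%Z with (j - 1 - Z.of_nat n)%Z in H0 by lia. lra. }
  assert (L2 : forall n : nat, J (j + 1 + Z.of_nat n)%Z -> f (j + 1)%Z <= f (j + 1 + Z.of_nat n)%Z).
  { induction n; intros Hn.
    - replace (j + 1 + Z.of_nat 0)%Z with (j + 1)%Z by lia. lra.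
    - assert (J (j + 1 + Z.of_nat n)%Z) by (apply (Jbetw j _ (j + 1 + Z.of_nat (S n))%Z); auto; lia).
      specialize (IHn H).
      replace (j + 1 + Z.of_nat (S n))%Z with (j + 1 + Z.of_nat n + 1)%Z in * by lia.
      assert (f (j + 1 + Z.of_nat n)%Z + C <= f (j + 1 + Z.of_nat n + 1)%Z).
      { apply HM2; auto. intros Ha'. apply (HE _ H). split; auto. apply Hb; auto. lia. }
      lra. }
  assert (Lo : forall i, J i -> (i <= j - 1)%Z -> f (j - 1)%Z <= f i).
  { intros i Hi Hij. replace i with (j - 1 - Z.of_nat (Z.to_nat (j - 1 - i)))%Z by lia.
    apply L1. replace (j - 1 - Z.of_nat (Z.to_nat (j - 1 - i)))%Z with i by lia. auto. }
  assert (Hi' : forall i, J i -> (j + 1 <= i)%Z -> f (j + 1)%Z <= f i).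
  { intros i Hi Hij. replace i with (j + 1 + Z.of_nat (Z.to_nat (i - j - 1)))%Z by lia.
    apply L2. replace (j + 1 + Z.of_nat (Z.to_nat (i - j - 1)))%Z with i by lia. auto. }
  assert (Hc : exists m, J m /\ f m <= f j /\ (J (j - 1)%Z -> f m <= f (j - 1)%Z) /\ (J (j + 1)%Z -> f m <= f (j + 1)%Z)).
  { destruct (classic (J (j - 1)%Z)) as [A1|A1]; destruct (classic (J (j + 1)%Z)) as [A2|A2].
    { destruct (Rle_dec (f (j - 1)%Z) (f j)) as [p1|p1%Rnot_le_lt];
      destruct (Rle_dec (f (j - 1)%Z) (f (j + 1)%Z)) as [p2|p2%Rnot_le_lt];
        destruct (Rle_dec (f j) (f (j + 1)%Z)) as [p3|p3%Rnot_le_lt].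
      { exists (j - 1)%Z. split; [auto|split; [lra|split; intros; lra]]. }
      { exists (j - 1)%Z. split; [auto|split; [lra|split; intros; lra]]. }
      { exists (j + 1)%Z. split; [auto|split; [lra|split; intros; lra]]. }
      { exists (j + 1)%Z. split; [auto|split; [lra|split; intros; lra]]. }
      { exists j. split; [auto|split; [lra|split; intros; lra]]. }
      { exists (j + 1)%Z. split; [auto|split; [lra|split; intros; lra]]. }
      { exists j. split; [auto|split; [lra|split; intros; lra]]. }
      { exists (j + 1)%Z. split; [auto|split; [lra|split; intros; lra]]. } }
    { destruct (Rle_dec (f (j - 1)%Z) (f j)) as [p1|p1%Rnot_le_lt].
      { exists (j - 1)%Z. split; [auto|split; [lra|split; intros; [lra|contradiction]]]. }
      { exists j. split; [auto|split; [lra|split; intros; [lra|contradiction]]]. } }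
    { destruct (Rle_dec (f (j + 1)%Z) (f j)) as [p1|p1%Rnot_le_lt].
      { exists (j + 1)%Z. split; [auto|split; [lra|split; intros; [contradiction|lra]]]. }
      { exists j. split; [auto|split; [lra|split; intros; [contradiction|lra]]]. } }
    { exists j. split; [auto|split; [lra|split; intros; contradiction]]. } }
  destruct Hc as (m & Hm & M0 & M1 & M2). exists m. split; auto.
  intros i Hi. destruct (Z_lt_le_dec i j) as [H|H].
  - assert (J (j - 1)%Z) by (apply (Jbetw i _ j); auto; lia). pose proof (Lo i Hi ltac:(lia)). specialize (M1 H0). lra.
  - destruct (Z.eq_dec i j) as [->|Hne]; [lra|].
    assert (J (j + 1)%Z) by (apply (Jbetw j _ i); auto; lia). pose proof (Hi' i Hi ltac:(lia)). specialize (M2 H0). lra.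
Qed.

End Comb.

Definition R0c (K C : R) := 8 * K + 3 * C.
Definition DDc (K C : R) := 2 * R0c K C + 1.
Definition LLc (K C : R) := K * (2 * DDc K C + K).

Section Main.
Context {X : Type}.
Context {d : X -> X -> R}.
Hypothesis Hmet : is_metric d.
Hypothesis Hgeo : is_geodesic d.
Variables C K : R.
Hypothesis HC : 0 < C.
Hypothesis HK1 : 1 < K.

Let R0 := R0c K C.
Let D := DDc K C.
Let L := LLc K C.

Lemma HK : 0 < K. Proof. lra. Qed.

Lemma consts : 0 <= R0 /\ 2 * R0 < D /\ 2 * K + C <= R0 /\ C <= R0 /\ 2 * (2 * K + C) < D.
Proof. unfold R0, D, DDc, R0c. lra. Qed.

Lemma longlen k x y : contracting_axis d K k x y -> L < dom_length k -> 2 * D < d (init k) (term k).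
Proof.
  intros (Hw & _ & _ & Hq & _) Hl.
  destruct Hw as [Hab Hdisc].
  assert (Pa : pdom k (p_a k)) by (split; [lra|intros h; apply (Hdisc h)]).
  assert (Pb : pdom k (p_b k)) by (split; [lra|intros h; apply (Hdisc h)]).
  destruct (Hq _ _ Pa Pb) as [H1 _]. unfold init, term.
  rewrite Rabs_left1 in H1 by lra.
  unfold dom_length, L, LLc in Hl. fold D in Hl.
  set (t := - (p_a k - p_b k) / K) in *.
  assert (Ht : t * K = p_b k - p_a k) by (unfold t; field; lra).
  assert (2 * D + K < t) by nra.
  lra.
Qed.


Variable J : Z -> Prop.
Variable p : X.
Variable kap : Z -> path X.
Variables x y : Z -> X.
Hypothesis HJ : consecutive_Z J.
Hypothesis Hax : forall i, J i -> contracting_axis d K (kap i) (x i) (y i) /\ L < dom_length (kap i).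
Hypothesis Hal : forall i, J i -> J (i + 1)%Z -> aligned d C (kap i) (kap (i + 1)%Z).

Lemma Hcon i : J i -> contracting d K (image (kap i)).
Proof. intros Hi. apply (Hax i Hi). Qed.
Lemma Hwf i : J i -> wf_path (kap i).
Proof. intros Hi. apply (Hax i Hi). Qed.
Lemma Hlong i : J i -> 2 * D < d (init (kap i)) (term (kap i)).
Proof. intros Hi. destruct (Hax i Hi) as [H1 H2]. eapply longlen; eauto. Qed.

Section Pt.
Variable q : X.
Let aP i := aligned_path_pt d D (kap i) q.
Let bP i := aligned_pt_path d D q (kap i).
Let fP i := dist_set d (image (kap i)) q.

Lemma HE_p i : J i -> ~ (aP i /\ bP i).
Proof.
  intros Hi [Ha Hb]. destruct (proj_ex K _ (Hcon i Hi) q) as [u Hu].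
  pose proof (pointed_lt_pts _ _ _ u Ha Hu). pose proof (pointed_lt_pts _ _ _ u Hb Hu).
  pose proof (Hlong i Hi). pose proof (d_tri Hmet (init (kap i)) u (term (kap i))).
  rewrite (d_sym Hmet (init (kap i)) u) in H2. lra.
Qed.

Lemma HP_p i : J i -> J (i + 1)%Z -> aP i \/ bP (i + 1)%Z.
Proof.
  intros Hi Hi1. destruct consts as (c1 & c2 & c3 & c4 & c5).
  destruct (classic (forall u, proj d (image (kap i)) q u -> d u (term (kap i)) <= R0)) as [H|H].
  - left. apply (diam_pointed_lt Hmet _ _ R0); auto.
  - right. apply not_all_ex_not in H. destruct H as [u Hu].
    apply imply_to_and in Hu. destruct Hu as [Hu Hn]. apply Rnot_le_lt in Hn.
    apply (diam_pointed_lt Hmet _ _ (2 * K + C)); auto; [|lra].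
    intros v Hv. destruct (keyP Hmet Hgeo K C HK HC _ _ (Hcon i Hi) (Hcon _ Hi1) (Hwf _ Hi1) (Hal i Hi Hi1) q u v Hu Hv) as [h|h]; auto.
    unfold R0, R0c in Hn. lra.
Qed.

Lemma not_pointed (S : X -> Prop) t : ~ Rbar_lt (diam d (setU (set1 t) S)) (Finite D) ->
  exists u, S u /\ R0 < d u t.
Proof.
  intros H. destruct consts as (c1 & c2 & c3 & c4 & c5). apply NNPP. intros Hn. apply H.
  apply (diam_pointed_lt Hmet _ _ R0); auto.
  intros u Hu. apply Rnot_lt_le. intros h. apply Hn. eauto.
Qed.

Lemma HM1_p i : J i -> J (i + 1)%Z -> ~ bP (i + 1)%Z -> fP (i + 1)%Z + C <= fP i.
Proof.
  intros Hi Hi1 Hb. destruct (not_pointed _ _ Hb) as (u & Hu & Hd).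
  destruct (proj_ex K _ (Hcon i Hi) q) as [w Hw].
  unfold fP. rewrite <- (projD _ _ _ Hw).
  apply (keyM1 Hmet Hgeo K C HK HC (kap i) _ (Hcon _ Hi1) (Hal i Hi Hi1) q u w Hu); auto.
  eapply projA; eauto.
Qed.

Lemma HM2_p i : J i -> J (i + 1)%Z -> ~ aP i -> fP i + C <= fP (i + 1)%Z.
Proof.
  intros Hi Hi1 Ha. destruct (not_pointed _ _ Ha) as (u & Hu & Hd).
  destruct (proj_ex K _ (Hcon _ Hi1) q) as [w Hw].
  unfold fP. rewrite <- (projD _ _ _ Hw).
  apply (keyM2 Hmet Hgeo K C HK HC (kap i) _ (Hcon _ Hi) (Hal i Hi Hi1) q u w Hu); auto.
  eapply projA; eauto.
Qed.

Lemma Hf_p i : J i -> 0 <= fP i.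
Proof. intros Hi. apply (f_nonneg Hmet K _ (Hcon i Hi)). Qed.

Let alpha i := forall u, proj d (image (kap i)) q u -> d u (term (kap i)) <= R0.
Let beta i := forall u, proj d (image (kap i)) q u -> d u (init (kap i)) <= R0.

Lemma HE_q i : J i -> ~ (alpha i /\ beta i).
Proof.
  intros Hi [Ha Hb]. destruct (proj_ex K _ (Hcon i Hi) q) as [u Hu].
  specialize (Ha u Hu). specialize (Hb u Hu). destruct consts as (c1 & c2 & c3 & c4 & c5).
  pose proof (Hlong i Hi). pose proof (d_tri Hmet (init (kap i)) u (term (kap i))).
  rewrite (d_sym Hmet (init (kap i)) u) in H0. lra.
Qed.

Lemma HP_q i : J i -> J (i + 1)%Z -> alpha i \/ beta (i + 1)%Z.
Proof.
  intros Hi Hi1. destruct consts as (c1 & c2 & c3 & c4 & c5).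
  destruct (classic (alpha i)) as [H|H]; [left; auto|right].
  unfold alpha in H. apply not_all_ex_not in H. destruct H as [u Hu].
  apply imply_to_and in Hu. destruct Hu as [Hu Hn]. apply Rnot_le_lt in Hn.
  intros v Hv. destruct (keyP Hmet Hgeo K C HK HC _ _ (Hcon i Hi) (Hcon _ Hi1) (Hwf _ Hi1) (Hal i Hi Hi1) q u v Hu Hv) as [h|h]; unfold R0, R0c in *; lra.
Qed.

Lemma alpha_down l m : J l -> J m -> (l < m)%Z -> image (kap m) q -> alpha l.
Proof.
  intros Hl Hm Hlm Hq. destruct consts as (c1 & c2 & c3 & c4 & c5).
  assert (Hm1 : J (m - 1)%Z) by (destruct HJ as [_ H']; apply (H' l _ m); auto; lia).
  assert (A1 : alpha (m - 1)%Z).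
  { intros u Hu. assert (Ha := Hal (m - 1)%Z Hm1 ltac:(replace (m - 1 + 1)%Z with m by lia; auto)).
    replace (m - 1 + 1)%Z with m in Ha by lia.
    pose proof (al1 _ _ _ _ _ Ha Hq Hu). lra. }
  pose proof (down_many J HJ alpha beta HE_q HP_q (Z.to_nat (m - 1 - l)) (m - 1)%Z Hm1 A1) as G.
  replace (m - 1 - Z.of_nat (Z.to_nat (m - 1 - l)))%Z with l in G by lia. auto.
Qed.

Lemma beta_up l m : J l -> J m -> (l < m)%Z -> image (kap l) q -> beta m.
Proof.
  intros Hl Hm Hlm Hq. destruct consts as (c1 & c2 & c3 & c4 & c5).
  assert (Hl1 : J (l + 1)%Z) by (destruct HJ as [_ H']; apply (H' l _ m); auto; lia).
  assert (B1 : beta (l + 1)%Z).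
  { intros u Hu. pose proof (al2 _ _ _ _ _ (Hal l Hl Hl1) Hq Hu). lra. }
  pose proof (up_many J HJ alpha beta HE_q HP_q (Z.to_nat (m - l - 1)) (l + 1)%Z Hl1 B1) as G.
  replace (l + 1 + Z.of_nat (Z.to_nat (m - l - 1)))%Z with m in G by lia. auto.
Qed.

End Pt.

Lemma main_concl :
    let J0 := fun j => J j /\
       (forall i, J i -> (i < j)%Z -> aligned_path_pt d D (kap i) p) /\
       (forall i, J i -> (j < i)%Z -> aligned_pt_path d D p (kap i)) in
    let U := fun z => exists i, J i /\ image (kap i) z in
    (forall i, J i -> ~ (aligned_path_pt d D (kap i) p /\ aligned_pt_path d D p (kap i))) /\
    ((exists j, forall k, J0 k <-> k = j) \/
     (exists j, forall k, J0 k <-> (k = j \/ k = (j + 1)%Z))) /\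
    ((exists a, proj d U p a) /\
     (forall a, proj d U p a -> exists j, J0 j /\ proj d (image (kap j)) p a)) /\
    (forall l m, J l -> J m -> (l < m)%Z -> aligned d D (kap l) (kap m)).
Proof.
  intros J0 U.
  pose proof (HE_p p) as HE. pose proof (HP_p p) as HP. pose proof (HM1_p p) as HM1.
  pose proof (HM2_p p) as HM2. pose proof (Hf_p p) as Hf.
  split; [exact HE|].
  split; [exact (J0_shape J HJ _ _ _ C HC Hf HE HP HM1 HM2)|].
  split; [split|].
  - destruct (min_exists J HJ _ _ _ C HC Hf HE HP HM1 HM2) as (m & Hm & Hmin).
    destruct (proj_ex K _ (Hcon m Hm) p) as [q Hq]. exists q. apply isproj_proj. split.
    + exists m; split; auto; eapply projA; eauto.
    + intros a' (i & Hi & Ha'). rewrite (projD _ _ _ Hq). specialize (Hmin i Hi).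
      eapply Rle_trans; [exact Hmin|]. apply (dist_set_le Hmet). auto.
  - intros a Ha. apply (proj_isproj Hmet) in Ha. destruct Ha as [(i & Hi & Hai) Hmin]. exists i.
    assert (Hpi : @isproj X d (image (kap i)) p a).
    { split; auto. intros a' Ha'. apply Hmin. exists i; auto. }
    split; [|apply isproj_proj; auto].
    apply (min_J0 J HJ _ _ _ C HC HE HP HM1 HM2 i Hi).
    intros k Hk. rewrite (dist_set_char _ _ _ Hpi).
    destruct (proj_ex K _ (Hcon k Hk) p) as [w Hw]. rewrite <- (projD _ _ _ Hw).
    apply Hmin. exists k; split; auto; eapply projA; eauto.
  - intros l m Hl Hm Hlm. destruct consts as (c1 & c2 & c3 & c4 & c5). split.
    + apply (diam_pointed_lt Hmet _ _ R0); auto.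
      intros w (q & Hq & Hw). exact (alpha_down q l m Hl Hm Hlm Hq w Hw).
    + apply (diam_pointed_lt Hmet _ _ R0); auto.
      intros w (q & Hq & Hw). exact (beta_up q l m Hl Hm Hlm Hq w Hw).
Qed.

End Main.

Theorem proposition3p5 (X : Type) (d : X -> X -> R)
  (Hmet : is_metric d) (Hgeo : is_geodesic d) :
  forall C K : R, 0 < C -> 1 < K ->
  exists D L : R, C < D /\ C < L /\
  forall (J : Z -> Prop) (p : X) (kap : Z -> path X) (x y : Z -> X),
    consecutive_Z J ->
    (forall i, J i -> contracting_axis d K (kap i) (x i) (y i) /\ L < dom_length (kap i)) ->
    (forall i, J i -> J (i + 1)%Z -> aligned d C (kap i) (kap (i + 1)%Z)) ->
    let J0 := fun j => J j /\
       (forall i, J i -> (i < j)%Z -> aligned_path_pt d D (kap i) p) /\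
       (forall i, J i -> (j < i)%Z -> aligned_pt_path d D p (kap i)) in
    let U := fun z => exists i, J i /\ image (kap i) z in
    (* (1) *)
    (forall i, J i -> ~ (aligned_path_pt d D (kap i) p /\ aligned_pt_path d D p (kap i))) /\
    (* (2) *)
    ((exists j, forall k, J0 k <-> k = j) \/
     (exists j, forall k, J0 k <-> (k = j \/ k = (j + 1)%Z))) /\
    (* (3) *)
    ((exists a, proj d U p a) /\
     (forall a, proj d U p a -> exists j, J0 j /\ proj d (image (kap j)) p a)) /\
    (* (4) *)
    (forall l m, J l -> J m -> (l < m)%Z -> aligned d D (kap l) (kap m)).
Proof.
  intros C K HC HK1. exists (DDc K C), (LLc K C). split; [|split].
  - unfold DDc, R0c. lra.
  - unfold LLc, DDc, R0c. nra.
  - intros J p kap x y HJ Hax Hal.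
    exact (main_concl Hmet Hgeo C K HC HK1 J p kap x y HJ Hax Hal).
Qed.
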